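(* Let $G$ be an undirected graph, $(V(G),\mathcal C)$ its corresponding connectoid, and $U\subseteq V(G)$. The following are equivalent: (a) there is a normal tree in $G$ containing $U$; (b) there is a normal tree of $(V(G),\mathcal C)$ containing $U$; (c) there is a weak normal tree of $(V(G),\mathcal C)$ containing $U$.
   Context: A connectoid is given by a set $S$ and a set $\mathcal F$ of finite subsets of $S$ such that (i) $F\cup F'\in\mathcal F$ whenever $F,F'\in\mathcal F$ and $F\cap F'\neq\emptyset$, and (ii) $\emptyset\in\mathcal F$ and $\{s\}\in\mathcal F$ for every $s\in S$. A set $C\subseteq S$ is connected if for all $x,y\in C$ there is $F\in\mathcal F$ with $F\subseteq C$ and $x,y\in F$; $\mathcal C$ is the set of connected sets. The corresponding connectoid of $G$ has $S=V(G)$ and $\mathcal F$ the vertex sets of finite connected subgraphs of $G$, so its connected sets are the vertex sets of connected subgraphs of $G$. For $S'\subseteq S$, $\mathcal K(S')$ denotes the set of maximal connected subsets of $S'$. A necklace is a connected set $N$ for which there is a family $(H_n)_{n\in\mathbb N}$ of finite connected sets with $N=\bigcup_n H_n$ and $H_i\cap H_j\neq\emptyset$ iff $|i-j|\le 1$. For a rooted tree $T$ with tree order $\le_T$ and $t\in V(T)$, let $\mathrm{Down}^\circ_T(t)=\{x\in V(T):x<_T t\}$. A weak normal tree of $(S,\mathcal C)$ is a rooted undirected tree $T$ with $V(T)\subseteq S$ (not required to be a subgraph of anything) such that (1) for every $C\in\mathcal C$ and every two $\le_T$-incomparable $u,v\in C\cap V(T)$ there is $w\in C$ with $w\le_T u$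 and $w\le_T v$, and (2) for all $u\le_T v$ in $V(T)$ there is $C\in\mathcal C$ containing $u,v$ with $C\cap\mathrm{Down}^\circ_T(u)=\emptyset$. It is a normal tree if moreover for every rooted ray $R$ of $T$ some necklace contains all but finitely many vertices of $R$. A tree ''contains $U$'' if $U\subseteq V(T)$. A normal tree in the graph $G$ is a rooted tree $T\subseteq G$ (a subgraph) such that the end vertices of every path in $G$ with only its end vertices in $T$ are $\le_T$-comparable (equivalently, every two vertices of $T$ adjacent in $G$ and, more generally, joined by a $T$-path in $G$, are comparable). *)

(* Defs.v *)
From Stdlib Require Import List Arith.
Import ListNotations.

Section Generic.
Context {X : Type}.

Fixpoint chain (R : X -> X -> Prop) (l : list X) : Prop :=
  match l with
  | x :: ((y :: _) as t) => R x y /\ chain R t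
  | _ => True
  end.

Definition path_of (R : X -> X -> Prop) (x y : X) (l : list X) : Prop :=
  hd_error l = Some x /\ last l x = y /\ chain R l /\ NoDup l.

Definition finite_set (A : X -> Prop) : Prop :=
  exists l : list X, forall x, A x -> In x l.

(* (S, Fam) is a connectoid, S being the whole type X *)
Definition is_connectoid (Fam : (X -> Prop) -> Prop) : Prop :=
  (forall F, Fam F -> finite_set F) /\
  (forall F F', Fam F -> Fam F' -> (exists x, F x /\ F' x) ->
      Fam (fun x => F x \/ F' x)) /\
  Fam (fun _ => False) /\
  (forall s, Fam (fun x => x = s)).

Definition conn_set (Fam : (X -> Prop) -> Prop) (C : X -> Prop) : Prop :=
  forall x y, C x -> C y ->
    exists F, Fam F /\ (forall z, F z -> C z) /\ F x /\ F y.

Definition necklace (Fam : (X -> Prop) -> Prop) (N : X -> Prop) : Prop :=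
  conn_set Fam N /\
  exists H : nat -> X -> Prop,
    (forall n, finite_set (H n) /\ conn_set Fam (H n)) /\
    (forall x, N x <-> exists n, H n x) /\
    (forall i j, (exists x, H i x /\ H j x) <-> (i <= j + 1 /\ j <= i + 1)).

Definition is_tree (VT : X -> Prop) (ET : X -> X -> Prop) : Prop :=
  (forall x y, ET x y -> VT x /\ VT y) /\
  (forall x y, ET x y -> ET y x) /\
  (forall x, ~ ET x x) /\
  (forall x y, VT x -> VT y -> exists l, path_of ET x y l) /\
  (forall x y l1 l2, path_of ET x y l1 -> path_of ET x y l2 -> l1 = l2).

Definition is_rooted_tree (VT : X -> Prop) (ET : X -> X -> Prop) (r : X) : Prop :=
  is_tree VT ET /\ VT r.

Definition tle (VT : X -> Prop) (ET : X -> X -> Prop) (r : X) (x y : X) : Prop :=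
  VT x /\ VT y /\ exists l, path_of ET r y l /\ In x l.

Definition tlt VT ET r (x y : X) : Prop := tle VT ET r x y /\ x <> y.

Definition tcomparable VT ET r (x y : X) : Prop :=
  tle VT ET r x y \/ tle VT ET r y x.

Definition down_open VT ET r (t : X) : X -> Prop := fun x => tlt VT ET r x t.

Definition rooted_ray (ET : X -> X -> Prop) (r : X) (R : nat -> X) : Prop :=
  R 0 = r /\ (forall n, ET (R n) (R (S n))) /\
  (forall m n, R m = R n -> m = n).

Definition weak_normal_tree (Fam : (X -> Prop) -> Prop)
    (VT : X -> Prop) (ET : X -> X -> Prop) (r : X) : Prop :=
  is_rooted_tree VT ET r /\
  (forall C, conn_set Fam C ->
     forall u v, C u -> C v -> VT u -> VT v -> ~ tcomparable VT ET r u v ->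
       exists w, C w /\ tle VT ET r w u /\ tle VT ET r w v) /\
  (forall u v, tle VT ET r u v ->
     exists C, conn_set Fam C /\ C u /\ C v /\
       (forall x, C x -> ~ down_open VT ET r u x)).

Definition normal_tree (Fam : (X -> Prop) -> Prop)
    (VT : X -> Prop) (ET : X -> X -> Prop) (r : X) : Prop :=
  weak_normal_tree Fam VT ET r /\
  (forall R, rooted_ray ET r R ->
     exists N, necklace Fam N /\ exists n0, forall n, n0 <= n -> N (R n)).

(* the connectoid of the graph with adjacency E: vertex sets of finite
   connected subgraphs (including the empty one) *)
Definition graph_fam (E : X -> X -> Prop) (F : X -> Prop) : Prop :=
  finite_set F /\
  forall x y, F x -> F y -> exists l, path_of E x y l /\ forall z, In z l -> F z.

Definition graph_normal_tree (E : X -> X -> Prop)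
    (VT : X -> Prop) (ET : X -> X -> Prop) (r : X) : Prop :=
  is_rooted_tree VT ET r /\
  (forall x y, ET x y -> E x y) /\
  (forall x y l, path_of E x y l -> VT x -> VT y ->
     (forall z, In z l -> z <> x -> z <> y -> ~ VT z) ->
     tcomparable VT ET r x y).

End Generic.

(* Main.v *)
Require Import Defs.
From Stdlib Require Import List Arith Lia Classical ClassicalEpsilon.
Import ListNotations.

Section Gen.
Variable X : Type.
Implicit Types (R : X -> X -> Prop) (l : list X).

Definition walk R (x y : X) l := hd_error l = Some x /\ last l x = y /\ chain R l.

Lemma last_cons_same (x : X) l : last (x :: l) x = last l x.
Proof. destruct l; reflexivity. Qed.

Lemma last_cons2 (x a d : X) l : last (x :: a :: l) d = last (a :: l) d.
Proof. reflexivity. Qed.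

Lemma last_indep (a d d' : X) l : last (a :: l) d = last (a :: l) d'.
Proof. revert a; induction l as [|b l IH]; intros a; [reflexivity|].
  rewrite !last_cons2; apply IH. Qed.

Lemma last_app_cons (d a : X) l1 l2 : last (l1 ++ a :: l2) d = last (a :: l2) d.
Proof. induction l1 as [|b l1 IH]; [reflexivity|].
  simpl app. destruct l1; simpl in *; [reflexivity| exact IH]. Qed.

Lemma chain_app R l1 (a : X) l2 :
  chain R (l1 ++ a :: l2) <-> chain R (l1 ++ [a]) /\ chain R (a :: l2).
Proof.
  induction l1 as [|b l1 IH]; simpl.
  - split; [intros H; split; [exact I|exact H] | intros [_ H]; exact H].
  - destruct l1 as [|c l1]; simpl in *.
    + tauto.
    + rewrite IH. tauto.
Qed.

Lemma chain_tl R (a : X) l : chain R (a :: l) -> chain R l.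
Proof. destruct l; simpl; tauto. Qed.

Lemma chain_rev R l : (forall x y, R x y -> R y x) -> chain R l -> chain R (rev l).
Proof.
  intros Hs. induction l as [|a l IH]; [simpl; tauto|].
  destruct l as [|b l]; [simpl; tauto|].
  intros [Hab Hc]. change (rev (a :: b :: l)) with ((rev l ++ [b]) ++ [a]).
  specialize (IH Hc). simpl in IH.
  rewrite <- app_assoc. simpl. apply chain_app. split; [exact IH|].
  simpl. split; [apply Hs; exact Hab| exact I].
Qed.

Lemma chain_mono R R' l : (forall x y, In x l -> In y l -> R x y -> R' x y) ->
  chain R l -> chain R' l.
Proof.
  induction l as [|a l IH]; [simpl; tauto|].
  destruct l as [|b l]; [simpl; tauto|].
  intros H [Hab Hc]. split.
  - apply H; simpl; auto.
  - apply IH; [|exact Hc]. intros x y Hx Hy. apply H; simpl in *; auto.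
Qed.

Lemma walk_cons R x y l : walk R x y l <-> exists l', l = x :: l' /\ last l' x = y /\ chain R (x :: l').
Proof.
  unfold walk. split.
  - intros [H1 [H2 H3]]. destruct l as [|a l']; [discriminate|].
    simpl in H1. injection H1 as H1. subst a. exists l'. rewrite last_cons_same in H2. auto.
  - intros [l' [-> [H2 H3]]]. rewrite last_cons_same. auto.
Qed.

Lemma path_walk R x y l : path_of R x y l -> walk R x y l.
Proof. intros [a [b [c d]]]; split; auto. Qed.

Lemma walk_app R x y z l1 l2 : walk R x y l1 -> walk R y z (y :: l2) -> walk R x z (l1 ++ l2).
Proof.
  intros H1 H2. apply walk_cons in H1 as [l1' [-> [E1 C1]]].
  apply walk_cons in H2 as [l2' [E [E2 C2]]]. injection E as <-.
  apply walk_cons. exists (l1' ++ l2). split; [reflexivity|].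
  split.
  - destruct l2 as [|b l2]; simpl in *.
    + rewrite app_nil_r. subst; reflexivity.
    + rewrite last_app_cons. rewrite (last_indep _ _ y). exact E2.
  - change (x :: l1' ++ l2) with ((x :: l1') ++ l2).
    destruct (@exists_last _ (x :: l1')) as [m [b Hm]]; [discriminate|].
    assert (b = y).
    { rewrite <- last_cons_same in E1. rewrite Hm, last_last in E1. exact E1. }
    subst b. rewrite Hm. rewrite <- app_assoc. simpl. apply chain_app.
    split; [rewrite <- Hm; exact C1| exact C2].
Qed.

Lemma walk_rev R x y l : (forall a b, R a b -> R b a) -> walk R x y l -> walk R y x (rev l).
Proof.
  intros Hs H. apply walk_cons in H as [l' [-> [E C]]].
  destruct (@exists_last _ (x :: l')) as [m [b Hm]]; [discriminate|].
  assert (b = y).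
  { rewrite <- E, <- last_cons_same, Hm, last_last. reflexivity. }
  subst b. unfold walk. split; [rewrite Hm, rev_app_distr; reflexivity|]. split.
  - simpl rev. apply last_last.
  - apply chain_rev; assumption.
Qed.

Lemma walk_shorten R x y l : walk R x y l -> exists l', path_of R x y l' /\ incl l' l.
Proof.
  intros H. apply walk_cons in H as [l' [-> [E C]]]. revert x E C.
  induction l' as [|a l' IH]; intros x E C.
  - simpl in E. subst. exists [y]. split; [repeat split; simpl; auto; constructor; [simpl; tauto| constructor]|].
    apply incl_refl.
  - rewrite (last_indep _ _ a), last_cons_same in E. destruct C as [Hxa C].
    destruct (IH a E C) as [p [[P1 [P2 [P3 P4]]] Pinc]].
    destruct p as [|a' p]; [discriminate|]. injection P1 as ->.
    destruct (classic (In x (a :: p))) as [Hin|Hnin].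
    + apply in_split in Hin as [q1 [q2 Hq]].
      exists (x :: q2). split.
      * rewrite Hq in P2, P3, P4. split; [reflexivity|]. split.
        -- rewrite (last_indep _ _ a). rewrite <- P2. symmetry. apply last_app_cons.
        -- split. apply chain_app in P3; tauto.
           apply NoDup_app_remove_l in P4. exact P4.
      * intros z Hz. right. apply Pinc. rewrite Hq. apply in_or_app. right; exact Hz.
    + exists (x :: a :: p). split.
      * split; [reflexivity|]. split; [rewrite last_cons2; rewrite (last_indep _ _ a); exact P2|].
        split; [split; assumption|]. constructor; assumption.
      * intros z [Hz|Hz]; [left; exact Hz| right; apply Pinc; exact Hz].
Qed.

Lemma path_prefix R x y l1 (a : X) l2 : path_of R x y (l1 ++ a :: l2) ->
  path_of R x a (l1 ++ [a]) /\ path_of R a y (a :: l2).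
Proof.
  intros [H1 [H2 [H3 H4]]]. apply chain_app in H3 as [C1 C2]. split.
  - split. { destruct l1; simpl in *; auto. } split. { apply last_last. }
    split; [exact C1|]. apply NoDup_app_remove_r with (l' := l2).
    rewrite <- app_assoc. exact H4.
  - split; [reflexivity|]. split.
    + rewrite <- H2, last_app_cons. apply last_indep.
    + split; [exact C2|]. apply NoDup_app_remove_l in H4; exact H4.
Qed.

End Gen.
Arguments walk {X}.

Lemma in_last {X} (d : X) l : l <> [] -> In (last l d) l.
Proof.
  induction l as [|a l IH]; [congruence|]. intros _. destruct l as [|b l].
  - left; reflexivity.
  - rewrite last_cons2. right. apply IH. discriminate.
Qed.

Section Tree.
Variable X : Type.
Variables (VT : X -> Prop) (ET : X -> X -> Prop) (r : X).
Hypothesis HT : is_rooted_tree VT ET r.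

Lemma rpath_ex y : VT y -> exists l, path_of ET r y l.
Proof. destruct HT as [[_ [_ [_ [H _]]]] Hr]. intros; apply H; auto. Qed.

Lemma path_uniq x y l1 l2 : path_of ET x y l1 -> path_of ET x y l2 -> l1 = l2.
Proof. destruct HT as [[_ [_ [_ [_ H]]]] _]. apply H. Qed.

Lemma path_in_last x y l : path_of ET x y l -> In y l.
Proof. intros [H1 [H2 _]]. subst y. apply in_last. destruct l; discriminate. Qed.

Lemma path_in_hd x y l : path_of ET x y l -> In x l.
Proof. intros [H1 _]. destruct l; inversion H1; left; reflexivity. Qed.

Lemma tle_all u v : tle VT ET r u v -> forall l, path_of ET r v l -> In u l.
Proof. intros [_ [_ [l0 [P I]]]] l Pl. rewrite <- (path_uniq _ _ _ _ P Pl). exact I. Qed.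

Lemma tle_refl v : VT v -> tle VT ET r v v.
Proof. intros Hv. destruct (rpath_ex v Hv) as [l P]. repeat split; auto.
  exists l; split; auto. eapply path_in_last; eauto. Qed.

Lemma tle_root v : VT v -> tle VT ET r r v.
Proof. intros Hv. destruct (rpath_ex v Hv) as [l P]. split; [apply HT|]. split; auto.
  exists l; split; auto. eapply path_in_hd; eauto. Qed.

Lemma tle_split u v : tle VT ET r u v -> exists l1 l2,
  path_of ET r v (l1 ++ u :: l2) /\ path_of ET r u (l1 ++ [u]) /\ path_of ET u v (u :: l2).
Proof. intros [_ [_ [l [P I]]]]. apply in_split in I as [l1 [l2 ->]].
  exists l1, l2. split; auto. apply path_prefix in P; tauto. Qed.

Lemma tle_trans u v w : tle VT ET r u v -> tle VT ET r v w -> tle VT ET r u w.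
Proof.
  intros H1 H2. destruct (tle_split _ _ H2) as [l1 [l2 [P [P1 _]]]].
  split; [apply H1|]. split; [apply H2|]. exists (l1 ++ v :: l2). split; auto.
  pose proof (tle_all _ _ H1 _ P1) as I. apply in_app_or in I as [I|[I|[]]];
  apply in_or_app; [left; exact I| right; left; exact I].
Qed.

Lemma tle_VT1 u v : tle VT ET r u v -> VT u. Proof. intros [a _]; exact a. Qed.
Lemma tle_VT2 u v : tle VT ET r u v -> VT v. Proof. intros [_ [a _]]; exact a. Qed.

Lemma tle_chain u w y : tle VT ET r u y -> tle VT ET r w y -> tle VT ET r u w \/ tle VT ET r w u.
Proof.
  intros H1 H2. destruct (tle_split _ _ H1) as [l1 [l2 [P [P1 _]]]].
  pose proof (tle_all _ _ H2 _ P) as I. apply in_app_or in I as [I|[I|I]].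
  - right. split; [eapply tle_VT1; eauto|]. split; [eapply tle_VT1; eauto|].
    exists (l1 ++ [u]); split; auto. apply in_or_app; left; exact I.
  - subst. left. apply tle_refl. eapply tle_VT1; eauto.
  - left. split; [eapply tle_VT1; eauto|]. split; [eapply tle_VT1; eauto|].
    apply in_split in I as [m1 [m2 Hm]]. rewrite Hm in P.
    rewrite app_comm_cons, app_assoc in P. apply path_prefix in P as [P' _].
    exists ((l1 ++ u :: m1) ++ [w]). split; auto.
    apply in_or_app; left. apply in_or_app; right; left; reflexivity.
Qed.

Lemma nodup_disj {Y} (l1 l2 : list Y) x : NoDup (l1 ++ l2) -> In x l1 -> In x l2 -> False.
Proof.
  induction l1 as [|a l1 IH]; [simpl; tauto|]. simpl. intros N [<-|I] J.
  - inversion N; subst. apply H1. apply in_or_app; right; exact J.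
  - inversion N; subst. eauto.
Qed.

Lemma tle_antisym u v : tle VT ET r u v -> tle VT ET r v u -> u = v.
Proof.
  intros H1 H2. destruct (tle_split _ _ H1) as [l1 [l2 [P [P1 _]]]].
  pose proof (tle_all _ _ H2 _ P1) as I.
  destruct P as [_ [Pl [_ Pnd]]]. rewrite last_app_cons in Pl.
  assert (J : In v (u :: l2)) by (rewrite <- Pl; apply in_last; discriminate).
  apply in_app_or in I as [I|[I|[]]]; [|exact I].
  exfalso. eapply nodup_disj; eauto.
Qed.


Lemma chain_VT a l : chain ET (a :: l) -> VT a -> forall z, In z (a :: l) -> VT z.
Proof.
  destruct HT as [[HE _] _]. revert a. induction l as [|b l IH]; intros a C Ha z Hz.
  - destruct Hz as [<-|[]]; exact Ha.
  - destruct C as [Cab C]. destruct Hz as [<-|Hz]; [exact Ha|].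
    apply (IH b C (proj2 (HE _ _ Cab)) z Hz).
Qed.

Lemma path_VT v l : path_of ET r v l -> forall z, In z l -> VT z.
Proof.
  intros [H1 [_ [C _]]]. destruct l as [|a l]; [discriminate|]. injection H1 as ->.
  apply chain_VT; auto. apply HT.
Qed.

Lemma tle_of_path u v l : path_of ET r v l -> In u l -> tle VT ET r u v.
Proof.
  intros P I. split; [eapply path_VT; eauto|]. split; [eapply path_VT; [eauto|eapply path_in_last; eauto]|].
  exists l; auto.
Qed.

Lemma tle_segment u v l2 : path_of ET u v (u :: l2) -> tle VT ET r u v ->
  forall z, In z (u :: l2) -> tle VT ET r u z /\ tle VT ET r z v.
Proof.
  intros Pu H z Hz. destruct (tle_split _ _ H) as [l1 [m2 [P [P1 P2]]]].
  rewrite (path_uniq _ _ _ _ Pu P2) in Hz.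
  split.
  - apply in_split in Hz as [q1 [q2 Hq]]. rewrite Hq, app_assoc in P.
    apply path_prefix in P as [P' _]. eapply tle_of_path; [exact P'|].
    destruct q1 as [|c q1]; simpl in Hq; injection Hq; intros; subst.
    + apply in_or_app; right; left; reflexivity.
    + apply in_or_app; left. apply in_or_app; right; left; reflexivity.
  - eapply tle_of_path; [exact P|]. apply in_or_app; right; exact Hz.
Qed.

Definition lvl (t : X) (n : nat) := exists l, path_of ET r t l /\ length l = S n.

Lemma lvl_ex t : VT t -> exists n, lvl t n.
Proof. intros Ht. destruct (rpath_ex t Ht) as [l P]. destruct l as [|a l]; [destruct P; discriminate|].
  exists (length l). exists (a :: l). auto. Qed.

Lemma lvl_fun t a b : lvl t a -> lvl t b -> a = b.
Proof. intros [l [P E]] [m [Q F]]. rewrite (path_uniq _ _ _ _ P Q) in E. congruence. Qed.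

Lemma lvl_tle w t a b : tle VT ET r w t -> lvl w a -> lvl t b -> a <= b /\ (a = b -> w = t).
Proof.
  intros H [l [P E]] [m [Q F]]. destruct (tle_split _ _ H) as [l1 [l2 [P0 [P1 _]]]].
  rewrite (path_uniq _ _ _ _ P P1) in E. rewrite (path_uniq _ _ _ _ Q P0) in F.
  rewrite app_length in E, F. simpl in E, F. split; [lia|].
  intros ->. assert (l2 = []) by (destruct l2; [reflexivity|simpl in *; lia]). subst.
  destruct P0 as [_ [L _]]. rewrite last_last in L. exact L.
Qed.

End Tree.
Arguments lvl {X}.

Lemma gpath_in_last {X} (R : X -> X -> Prop) x y l : path_of R x y l -> In y l.
Proof. intros [H1 [H2 _]]. subst y. apply in_last. destruct l; discriminate. Qed.

Lemma gpath_in_hd {X} (R : X -> X -> Prop) x y l : path_of R x y l -> In x l.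
Proof. intros [H1 _]. destruct l; inversion H1; left; reflexivity. Qed.

Lemma path_rev {X} (R : X -> X -> Prop) x y l : (forall a b, R a b -> R b a) ->
  path_of R x y l -> path_of R y x (rev l).
Proof.
  intros Hs P. pose proof (walk_rev _ _ _ _ _ Hs (path_walk _ _ _ _ _ P)) as [a [b c]].
  split; [exact a|]. split; [exact b|]. split; [exact c|]. apply NoDup_rev. apply P.
Qed.

Lemma first_split {X} (P : X -> Prop) l : (exists z, In z l /\ P z) ->
  exists m y l2, l = m ++ y :: l2 /\ P y /\ forall z, In z m -> ~ P z.
Proof.
  induction l as [|a l IH]; intros [z [Hz Pz]]; [destruct Hz|].
  destruct (classic (P a)) as [Pa|Pa].
  - exists [], a, l. simpl. repeat split; auto.
  - destruct Hz as [<-|Hz]; [contradiction|].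
    destruct IH as [m [y [l2 [-> [Py Hm]]]]]; [eauto|].
    exists (a :: m), y, l2. split; [reflexivity|]. split; [exact Py|].
    intros q [<-|Hq]; [exact Pa| exact (Hm q Hq)].
Qed.

Section PartC.
Variable V : Type.
Variable E : V -> V -> Prop.
Hypothesis Esym : forall x y, E x y -> E y x.
Variables (VT : V -> Prop) (ET : V -> V -> Prop) (r : V).
Hypothesis HG : graph_normal_tree E VT ET r.

Let HT : is_rooted_tree VT ET r := proj1 HG.
Let HTE : forall x y, ET x y -> E x y := proj1 (proj2 HG).
Let HN := proj2 (proj2 HG).
Let trans := tle_trans _ _ _ _ HT.
Let refl := tle_refl _ _ _ _ HT.

Lemma minlem n : forall x l, length l <= n -> chain E (x :: l) -> NoDup (x :: l) -> VT x ->
  exists w, In w (x :: l) /\ VT w /\ forall z, In z (x :: l) -> VT z -> tle VT ET r w z.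
Proof.
  induction n as [|n IH]; intros x l Hlen C N Hx.
  - destruct l; [|simpl in Hlen; lia]. exists x. split; [left; auto|]. split; auto.
    intros z [<-|[]] _. apply refl; auto.
  - destruct (classic (exists z, In z l /\ VT z)) as [Ex|NEx].
    2:{ exists x. split; [left; auto|]. split; auto. intros z [<-|Hz] Vz.
        apply refl; auto. exfalso; eauto. }
    destruct (first_split _ _ Ex) as [m [y [l2 [-> [Vy Hm]]]]].
    assert (Cxy : chain E ((x :: m) ++ [y]) /\ chain E (y :: l2)) by (apply chain_app; exact C).
    assert (Nxy : NoDup ((x :: m) ++ [y])).
    { apply NoDup_app_remove_r with (l' := l2). rewrite <- app_assoc. exact N. }
    assert (Ny : NoDup (y :: l2)).
    { change (x :: m ++ y :: l2) with ((x :: m) ++ y :: l2) in N. apply NoDup_app_remove_l in N. exact N. }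
    assert (Hcomp : tcomparable VT ET r x y).
    { apply (HN x y ((x :: m) ++ [y])); auto.
      - split; [reflexivity|]. split; [apply last_last|]. split; [apply Cxy| exact Nxy].
      - intros z Hz H1 H2. apply in_app_or in Hz as [[<-|Hz]|[<-|[]]]; try congruence. apply Hm; auto. }
    destruct (IH y l2) as [w' [Iw' [Vw' Hw']]]; [rewrite app_length in Hlen; simpl in Hlen; lia|apply Cxy|exact Ny|exact Vy|].
    destruct (classic (tle VT ET r w' x)) as [Hwx|Hwx].
    + exists w'. split; [right; apply in_or_app; right; exact Iw'|]. split; auto.
      intros z Hz Vz. destruct Hz as [<-|Hz]; [exact Hwx|]. apply in_app_or in Hz as [Hz|Hz].
      * exfalso; eapply Hm; eauto.
      * apply Hw'; auto.
    + assert (Hxy : tle VT ET r x y).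
      { destruct Hcomp as [H|H]; auto. exfalso. apply Hwx. apply (trans w' y x); auto.
        apply Hw'; [left; auto| auto]. }
      assert (Hxw : tle VT ET r x w').
      { destruct (tle_chain _ _ _ _ HT x w' y) as [H|H]; auto. apply Hw'; [left; auto|auto]. contradiction. }
      exists x. split; [left; auto|]. split; auto. intros z Hz Vz. destruct Hz as [<-|Hz]; [apply refl; auto|].
      apply in_app_or in Hz as [Hz|Hz]; [exfalso; eapply Hm; eauto|].
      eapply trans; eauto.
Qed.

Lemma seg_path a b : tle VT ET r a b -> exists l, path_of E a b l /\ forall z, In z l -> tle VT ET r a z /\ tle VT ET r z b.
Proof.
  intros H. destruct (tle_split _ _ _ _ _ _ H) as [l1 [l2 [_ [_ P2]]]].
  exists (a :: l2). split.
  - destruct P2 as [p1 [p2 [p3 p4]]]. split; auto. split; auto. split; auto.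
    eapply chain_mono; [|exact p3]. intros; apply HTE; auto.
  - apply tle_segment; auto.
Qed.

Definition Iv a b z := tle VT ET r a z /\ tle VT ET r z b.

Lemma Iv_fam a b : tle VT ET r a b -> graph_fam E (Iv a b).
Proof.
  intros Hab. split.
  - destruct (rpath_ex _ _ _ _ HT b (tle_VT2 _ _ _ _ _ _ Hab)) as [l P]. exists l.
    intros z [_ Hz]. eapply tle_all; eauto.
  - intros x y [Hx1 Hx2] [Hy1 Hy2]. destruct (tle_chain _ _ _ _ HT x y b Hx2 Hy2) as [H|H].
    + destruct (seg_path x y H) as [l [P Hl]]. exists l. split; auto.
      intros z Hz. destruct (Hl z Hz). split; [apply (trans a x z)|apply (trans z y b)]; auto.
    + destruct (seg_path y x H) as [l [P Hl]]. exists (rev l). split; [apply path_rev; auto|].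
      intros z Hz. apply in_rev in Hz. destruct (Hl z Hz). split; [apply (trans a y z)|apply (trans z x b)]; auto.
Qed.

Lemma Iv_conn a b : tle VT ET r a b -> conn_set (graph_fam E) (Iv a b).
Proof.
  intros Hab x y [Hx1 Hx2] [Hy1 Hy2]. destruct (tle_chain _ _ _ _ HT x y b Hx2 Hy2) as [H|H].
  - exists (Iv x y). split; [apply Iv_fam; auto|]. split.
    + intros z [H1 H2]. split; [apply (trans a x z)|apply (trans z y b)]; auto.
    + split; split; auto; apply refl; eapply tle_VT1; eauto.
  - exists (Iv y x). split; [apply Iv_fam; auto|]. split.
    + intros z [H1 H2]. split; [apply (trans a y z)|apply (trans z x b)]; auto.
    + split; split; auto; apply refl; eapply tle_VT1; eauto.
Qed.

Lemma weak_part : weak_normal_tree (graph_fam E) VT ET r.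
Proof.
  split; [exact HT|]. split.
  - intros C HC u v Cu Cv Vu Vv _.
    destruct (HC u v Cu Cv) as [F [[_ HF] [FC [Fu Fv]]]].
    destruct (HF u v Fu Fv) as [l [P Pl]].
    destruct l as [|x l]; [destruct P; discriminate|].
    assert (x = u) by (destruct P as [P _]; injection P; auto). subst x.
    destruct (minlem (length l) u l (le_n _)) as [w [Iw [Vw Hw]]]; auto; try apply P.
    exists w. split; [apply FC, Pl, Iw|]. split; apply Hw; auto; [left; auto|]. eapply gpath_in_last; eauto.
  - intros u v Huv. exists (Iv u v). split; [apply Iv_conn; auto|].
    split; [split; auto; apply refl; eapply tle_VT1; eauto|].
    split; [split; auto; apply refl; eapply tle_VT2; eauto|].
    intros x [H1 _] [H2 H3]. apply H3. eapply tle_antisym; eauto.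
Qed.

Section Ray.
Variable R : nat -> V.
Hypothesis HR : rooted_ray ET r R.

Lemma chain_ray k : forall a, chain E (map R (seq a k)).
Proof.
  induction k as [|k IH]; intros a; [simpl; auto|].
  simpl. destruct k as [|k]; [simpl; auto|]. split; [apply HTE, HR| apply IH].
Qed.

Lemma nodup_ray a k : NoDup (map R (seq a k)).
Proof.
  apply NoDup_map_NoDup_ForallPairs; [|apply seq_NoDup].
  intros x y _ _ H. apply HR; auto.
Qed.

Definition Ir i j z := exists k, i <= k <= j /\ R k = z.

Lemma ray_path a k : path_of E (R a) (R (a + k)) (map R (seq a (S k))).
Proof.
  split; [reflexivity|]. split.
  - rewrite seq_S, map_app. apply last_last.
  - split; [apply chain_ray| apply nodup_ray].
Qed.

Lemma Ir_fam i j : graph_fam E (Ir i j).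
Proof.
  split.
  - exists (map R (seq i (S (j - i)))). intros z [k [Hk <-]]. apply in_map. apply in_seq. lia.
  - intros x y [a [Ha <-]] [b [Hb <-]]. destruct (le_lt_dec a b) as [Hab|Hab].
    + exists (map R (seq a (S (b - a)))). split.
      * replace b with (a + (b - a)) at 1 by lia. apply ray_path.
      * intros z Hz. apply in_map_iff in Hz as [k [<- Hk]]. apply in_seq in Hk. exists k; split; [lia|auto].
    + exists (rev (map R (seq b (S (a - b))))). split.
      * apply path_rev; auto. replace a with (b + (a - b)) at 1 by lia. apply ray_path.
      * intros z Hz. apply in_rev in Hz. apply in_map_iff in Hz as [k [<- Hk]]. apply in_seq in Hk. exists k; split; [lia|auto].
Qed.

Lemma ray_necklace : necklace (graph_fam E) (fun z => exists n, R n = z).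
Proof.
  split.
  - intros x y [a <-] [b <-]. exists (Ir (min a b) (max a b)). split; [apply Ir_fam|].
    split; [intros z [k [_ <-]]; eauto|]. split; [exists a| exists b]; split; auto; lia.
  - exists (fun n => Ir n (S n)). split; [|split].
    + intros n. split; [apply Ir_fam|]. intros x y Hx Hy. exists (Ir n (S n)).
      split; [apply Ir_fam|]. auto.
    + intros x. split; [intros [n <-]; exists n; exists n; split; [lia|auto]|].
      intros [n [k [_ <-]]]. eauto.
    + intros i j. split.
      * intros [x [[a [Ha <-]] [b [Hb Hab]]]]. apply HR in Hab. lia.
      * intros H. exists (R (max i j)). split; exists (max i j); split; auto; lia.
Qed.

End Ray.

Lemma partC : normal_tree (graph_fam E) VT ET r.
Proof.
  split; [apply weak_part|]. intros R HR. exists (fun z => exists n, R n = z).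
  split; [apply ray_necklace; auto|]. exists 0. intros n _. eauto.
Qed.

End PartC.

Lemma cross {X} (R : X -> X -> Prop) (P : X -> Prop) l : forall h, chain R (h :: l) -> P h ->
  (exists z, In z l /\ ~ P z) ->
  exists l1 v u l2, h :: l = l1 ++ v :: u :: l2 /\ P v /\ ~ P u /\ R v u.
Proof.
  induction l as [|a l IH]; intros h C Ph [z [Hz Pz]]; [destruct Hz|].
  destruct C as [Rha C]. destruct (classic (P a)) as [Pa|Pa].
  - destruct Hz as [<-|Hz]; [contradiction|].
    destruct (IH a C Pa) as [l1 [v [u [l2 [Hl [Pv [Pu Rvu]]]]]]]; [eauto|].
    exists (h :: l1), v, u, l2. rewrite Hl. auto.
  - exists [], h, a, l. simpl. auto.
Qed.

Definition parent_ok {X} (W : X -> Prop) (p : X -> X) (d : X -> nat) (r : X) :=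
  W r /\ d r = 0 /\ (forall x, W x -> x <> r -> W (p x) /\ S (d (p x)) = d x) /\
  (forall x, W x -> d x = 0 -> x = r).

Definition anc {X} (W : X -> Prop) (p : X -> X) (d : X -> nat) (a x : X) :=
  W x /\ exists k, k <= d x /\ Nat.iter k p x = a.

Definition PE {X} (W : X -> Prop) (p : X -> X) (r : X) (x y : X) :=
  W x /\ W y /\ ((x <> r /\ p x = y) \/ (y <> r /\ p y = x)).

Section Par.
Variable X : Type.
Variables (W : X -> Prop) (p : X -> X) (d : X -> nat) (r : X).
Hypothesis HP : parent_ok W p d r.

Lemma iter_W x k : W x -> k <= d x -> W (Nat.iter k p x) /\ d (Nat.iter k p x) = d x - k.
Proof.
  destruct HP as [Hr [Hd0 [Hp Hz]]]. intros Wx. induction k as [|k IH]; intros Hk.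
  - simpl. split; auto. lia.
  - destruct IH as [W1 D1]; [lia|]. simpl. set (y := Nat.iter k p x) in *.
    assert (y <> r) by (intros E; rewrite E in D1; lia).
    destruct (Hp y W1 H) as [W2 D2]. split; auto. lia.
Qed.

Lemma anc_W1 a x : anc W p d a x -> W a.
Proof. intros [Wx [k [Hk <-]]]. apply iter_W; auto. Qed.

Lemma anc_refl x : W x -> anc W p d x x.
Proof. intros Wx. split; auto. exists 0; split; [lia|reflexivity]. Qed.

Lemma anc_d a x : anc W p d a x -> d a <= d x /\ (d a = d x -> a = x).
Proof. intros [Wx [k [Hk <-]]]. destruct (iter_W x k Wx Hk) as [_ D]. rewrite D. split; [lia|].
  intros. assert (k = 0) by lia. subst. reflexivity. Qed.

Lemma iter_add k1 k2 x : Nat.iter (k1 + k2) p x = Nat.iter k1 p (Nat.iter k2 p x).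
Proof. induction k1; simpl; auto. rewrite IHk1; auto. Qed.

Lemma anc_trans a b c : anc W p d a b -> anc W p d b c -> anc W p d a c.
Proof.
  intros [Wb [k1 [H1 E1]]] [Wc [k2 [H2 E2]]]. split; auto. exists (k1 + k2).
  subst b. destruct (iter_W c k2 Wc H2) as [_ D]. split; [lia|]. rewrite iter_add. auto.
Qed.

Lemma anc_parent a x : anc W p d a x -> x <> a -> x <> r /\ anc W p d a (p x).
Proof.
  destruct HP as [Hr [Hd0 [Hp Hz]]].
  intros [Wx [k [Hk E]]] Hne. destruct k as [|k]; [simpl in E; congruence|].
  assert (x <> r) by (intros ->; lia). split; auto. destruct (Hp x Wx H) as [W1 D1].
  split; auto. exists k. split; [lia|]. rewrite <- E. replace (S k) with (k + 1) by lia.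
  rewrite iter_add. reflexivity.
Qed.

Lemma anc_child a x c : anc W p d a x -> W c -> c <> r -> p c = x -> anc W p d a c.
Proof.
  destruct HP as [Hr [Hd0 [Hp Hz]]].
  intros [Wx [k [Hk E]]] Wc Hc Hpc. destruct (Hp c Wc Hc) as [_ D]. rewrite Hpc in D. split; auto.
  exists (S k). split; [lia|]. replace (S k) with (k + 1) by lia.
  rewrite iter_add. simpl. rewrite Hpc. exact E.
Qed.

Lemma anc_not_parent a : W a -> a <> r -> ~ anc W p d a (p a).
Proof.
  destruct HP as [Hr [Hd0 [Hp Hz]]]. intros Wa Ha H. apply anc_d in H as [H _].
  destruct (Hp a Wa Ha). lia.
Qed.

Lemma edge_into a u v : PE W p r u v -> anc W p d a v -> ~ anc W p d a u -> v = a /\ u = p a /\ a <> r.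
Proof.
  intros [Wu [Wv [[Hu Hpu]|[Hv Hpv]]]] Av Au.
  - exfalso. apply Au. eapply anc_child; eauto.
  - destruct (classic (v = a)) as [->|Hne]; [auto|].
    exfalso. apply Au. rewrite <- Hpv. apply anc_parent; auto.
Qed.

Lemma PE_sym x y : PE W p r x y -> PE W p r y x.
Proof. intros [a [b c]]. split; auto. split; auto. tauto. Qed.

Lemma nodup_last_in (x : X) (l : list X) : NoDup (x :: l) -> l <> [] -> last l x <> x.
Proof. intros N Hl E. inversion N; subst. apply H1.
  assert (I : In (last l x) l) by (apply in_last; auto). rewrite E in I. exact I. Qed.

Lemma uniq_helper x a b y l1 l2 :
  path_of (PE W p r) x y (x :: a :: l1) -> path_of (PE W p r) x y (x :: b :: l2) ->
  a <> r -> p a = x -> a = b.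
Proof.
  intros P1 P2 Ha Hpa.
  destruct P1 as [_ [L1 [C1 N1]]]. destruct P2 as [_ [L2 [C2 N2]]].
  assert (Wa : W a) by (destruct C1 as [[_ [Wa _]] _]; exact Wa).
  assert (Dy : anc W p d a y).
  { destruct (classic (anc W p d a y)) as [H|H]; auto. exfalso.
    destruct (cross (PE W p r) (anc W p d a) l1 a (proj2 C1) (anc_refl a Wa)) as [m1 [v [u [m2 [Hm [Pv [Pu Rvu]]]]]]].
    { exists y. split; auto.
      destruct l1 as [|c l1]. { simpl in L1. subst y. exfalso. apply H. apply anc_refl; auto. }
      rewrite <- L1. rewrite !last_cons2. apply in_last. discriminate. }
    destruct (edge_into a u v (PE_sym _ _ Rvu) Pv Pu) as [_ [Hu _]].
    assert (Ix : In x (a :: l1)) by (rewrite Hm; apply in_or_app; right; right; left; rewrite Hu; auto).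
    inversion N1; subst. contradiction. }
  destruct (classic (a = b)) as [|Hab]; auto. exfalso.
  assert (Nx : ~ anc W p d a x) by (rewrite <- Hpa; apply anc_not_parent; auto).
  destruct (cross (PE W p r) (fun z => ~ anc W p d a z) (b :: l2) x C2 Nx) as [m1 [v [u [m2 [Hm [Pv [Pu Rvu]]]]]]].
  { exists y. split; [|tauto]. rewrite <- L2. rewrite last_cons2. apply in_last. discriminate. }
  apply NNPP in Pu. destruct (edge_into a v u Rvu Pu Pv) as [Hu [Hv _]].
  destruct m1 as [|c m1].
  - simpl in Hm. injection Hm; intros; subst. congruence.
  - simpl in Hm. injection Hm as Hc Hm.
    assert (Ix : In x (b :: l2)) by (rewrite Hm; apply in_or_app; right; left; rewrite Hv; auto).
    inversion N2; subst. contradiction.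
Qed.

Lemma PE_uniq x y l1 l2 : path_of (PE W p r) x y l1 -> path_of (PE W p r) x y l2 -> l1 = l2.
Proof.
  revert x l2. induction l1 as [|a0 l1 IH]; intros x l2 P1 P2; [destruct P1; discriminate|].
  assert (a0 = x) by (destruct P1 as [H _]; injection H; auto). subst a0.
  destruct l2 as [|b0 l2]; [destruct P2; discriminate|].
  assert (b0 = x) by (destruct P2 as [H _]; injection H; auto). subst b0.
  destruct l1 as [|a l1]; destruct l2 as [|b l2]; auto.
  - exfalso. destruct P1 as [_ [L1 _]]. destruct P2 as [_ [L2 [_ N2]]]. simpl in L1.
    apply (nodup_last_in x (b :: l2) N2); [discriminate|]. rewrite last_cons_same in L2. congruence.
  - exfalso. destruct P2 as [_ [L2 _]]. destruct P1 as [_ [L1 [_ N1]]]. simpl in L2.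
    apply (nodup_last_in x (a :: l1) N1); [discriminate|]. rewrite last_cons_same in L1. congruence.
  - assert (a = b).
    { destruct (classic (a = b)) as [|Hab]; auto.
      pose proof P1 as Q1. pose proof P2 as Q2.
      destruct Q1 as [_ [_ [[[_ [_ Ea]] _] _]]]. destruct Q2 as [_ [_ [[[_ [_ Eb]] _] _]]].
      destruct Ea as [[Hx Ea]|[Ha Ea]]; [destruct Eb as [[_ Eb]|[Hb Eb]]|].
      - congruence.
      - symmetry. eapply uniq_helper; eauto.
      - eapply uniq_helper; eauto. }
    subst b. f_equal. apply (IH a).
    + apply path_prefix with (l1 := [x]) in P1. apply P1.
    + apply path_prefix with (l1 := [x]) in P2. apply P2.
Qed.

Definition upl x := map (fun k => Nat.iter k p x) (seq 0 (S (d x))).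

Lemma upl_chain x : W x -> forall k j, k + j <= d x -> chain (PE W p r) (map (fun i => Nat.iter i p x) (seq k (S j))).
Proof.
  destruct HP as [Hr [Hd0 [Hp Hz]]]. intros Wx k j. revert k. induction j as [|j IH]; intros k Hk.
  - simpl. auto.
  - change (seq k (S (S j))) with (k :: seq (S k) (S j)). simpl map. simpl seq in IH.
    destruct (iter_W x k Wx) as [W1 D1]; [lia|].
    assert (Hne : Nat.iter k p x <> r) by (intros E; rewrite E in D1; lia).
    split.
    + split; auto. split; [apply (Hp _ W1 Hne)|]. left. split; auto.
    + specialize (IH (S k)). simpl in IH. apply IH. lia.
Qed.

Lemma upl_nodup x : W x -> NoDup (upl x).
Proof.
  intros Wx. apply NoDup_map_NoDup_ForallPairs; [|apply seq_NoDup].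
  intros i j Hi Hj E. apply in_seq in Hi. apply in_seq in Hj.
  destruct (iter_W x i Wx) as [_ D1]; [lia|]. destruct (iter_W x j Wx) as [_ D2]; [lia|].
  rewrite E in D1. lia.
Qed.

Lemma upl_walk x : W x -> walk (PE W p r) x r (upl x).
Proof.
  destruct HP as [Hr [Hd0 [Hp Hz]]]. intros Wx. split; [reflexivity|]. split.
  - unfold upl. rewrite seq_S, map_app. cbn [map]. rewrite last_last. simpl.
    destruct (iter_W x (d x) Wx) as [W1 D1]; [lia|]. apply Hz; auto. lia.
  - apply (upl_chain x Wx 0 (d x)). lia.
Qed.

Lemma rpath_par x : W x -> path_of (PE W p r) r x (rev (upl x)).
Proof.
  intros Wx. pose proof (walk_rev _ _ _ _ _ PE_sym (upl_walk x Wx)) as [a [b c]].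
  split; auto. split; auto. split; auto. apply NoDup_rev, upl_nodup; auto.
Qed.

Lemma anc_in_upl a x : anc W p d a x -> In a (upl x).
Proof. intros [Wx [k [Hk <-]]]. apply in_map_iff. exists k. split; [reflexivity|]. apply in_seq. lia. Qed.

Lemma PE_tree : is_rooted_tree W (PE W p r) r.
Proof.
  destruct HP as [Hr [Hd0 [Hp Hz]]]. split; [|exact Hr].
  split; [intros x y [a [b _]]; auto|]. split; [apply PE_sym|]. split.
  - intros x [Wx [_ [[Hx E]|[Hx E]]]]; destruct (Hp x Wx Hx) as [_ D]; rewrite E in D; lia.
  - split; [|apply PE_uniq].
    intros x y Wx Wy.
    assert (Hw : walk (PE W p r) x y (upl x ++ tl (rev (upl y)))).
    { eapply walk_app. apply upl_walk; auto.
      pose proof (rpath_par y Wy) as [H1 [H2 [H3 _]]].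
      destruct (rev (upl y)) as [|c m]; [discriminate|]. injection H1 as ->. split; auto. }
    apply walk_shorten in Hw as [l [Hl _]]. eauto.
Qed.

Lemma anc_tle a x : anc W p d a x -> tle W (PE W p r) r a x.
Proof.
  intros H. split; [eapply anc_W1; eauto|]. split; [apply H|]. exists (rev (upl x)).
  split; [apply rpath_par, H|]. apply in_rev. rewrite rev_involutive. apply anc_in_upl; auto.
Qed.

End Par.

Lemma chain_last_edge {X} (R : X -> X -> Prop) m b d : m <> [] -> chain R (m ++ [b]) -> R (last m d) b.
Proof.
  intros Hm C. destruct (exists_last Hm) as [m' [a ->]]. rewrite last_last.
  rewrite <- app_assoc in C. simpl in C. apply chain_app in C. simpl in C. tauto.
Qed.

Lemma chain_prefix {X} (R : X -> X -> Prop) l1 l2 : chain R (l1 ++ l2) -> chain R l1.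
Proof.
  induction l1 as [|a l1 IH]; [simpl; auto|]. destruct l1 as [|b l1]; [simpl; auto|].
  intros [H C]. split; auto.
Qed.

Lemma walk_between {X} (R : X -> X -> Prop) l1 x l2 y : chain R (l1 ++ x :: l2) -> In y (x :: l2) ->
  exists l', walk R x y l' /\ incl l' (x :: l2).
Proof.
  intros C Hy. apply chain_app in C as [_ C]. apply in_split in Hy as [m1 [m2 Hm]].
  exists (m1 ++ [y]). split.
  - split; [destruct m1; simpl in Hm; injection Hm; intros; subst; reflexivity|].
    split; [apply last_last|]. rewrite Hm in C. apply chain_app in C; tauto.
  - intros z Hz. rewrite Hm. apply in_app_or in Hz as [Hz|[<-|[]]]; apply in_or_app; [left; auto|right; left; auto].
Qed.

Lemma walk_sub {X} (R : X -> X -> Prop) l x y : (forall a b, R a b -> R b a) -> chain R l -> In x l -> In y l ->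
  exists l', walk R x y l' /\ incl l' l.
Proof.
  intros Hs C Hx Hy. apply in_split in Hx as [l1 [l2 ->]].
  apply in_app_or in Hy as [Hy|Hy].
  - apply in_split in Hy as [m1 [m2 ->]]. rewrite <- app_assoc in C. simpl in C.
    destruct (walk_between R m1 y (m2 ++ x :: l2) x C) as [l' [W1 I1]].
    { right. apply in_or_app. right; left; auto. }
    exists (rev l'). split; [apply walk_rev; auto|].
    intros z Hz. apply in_rev in Hz. apply I1 in Hz. rewrite <- app_assoc. apply in_or_app. right. exact Hz.
  - destruct (walk_between R l1 x l2 y C Hy) as [l' [W1 I1]]. exists l'. split; auto.
    intros z Hz. apply I1 in Hz. apply in_or_app; right; exact Hz.
Qed.

Section D1.
Variable V : Type.
Variable E : V -> V -> Prop.
Hypothesis Esym : forall x y, E x y -> E y x.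

Definition comp (W : V -> Prop) a b := exists l, walk E a b l /\ forall q, In q l -> ~ W q.
Definition adj (W : V -> Prop) w t := exists z, comp W t z /\ E w z.
Definition Gconn a b := exists l, walk E a b l.

Lemma comp_refl W a : ~ W a -> comp W a a.
Proof. intros H. exists [a]. split; [split; [reflexivity|split; [reflexivity|exact I]]|]. intros q [<-|[]]; auto. Qed.

Lemma comp_sym W a b : comp W a b -> comp W b a.
Proof. intros [l [Hl Hq]]. exists (rev l). split; [apply walk_rev; auto|]. intros q Iq; apply Hq, in_rev, Iq. Qed.

Lemma comp_trans W a b c : comp W a b -> comp W b c -> comp W a c.
Proof.
  intros [l1 [H1 Q1]] [l2 [H2 Q2]]. apply walk_cons in H2 as [l2' [-> [L2 C2]]].
  exists (l1 ++ l2'). split.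
  - eapply walk_app; eauto. apply walk_cons. eauto.
  - intros q Iq. apply in_app_or in Iq as [Iq|Iq]; [apply Q1; auto| apply Q2; right; auto].
Qed.

Lemma comp_notW1 W a b : comp W a b -> ~ W a.
Proof. intros [l [Hl Q]]. apply Q. apply walk_cons in Hl as [l' [-> _]]. left; auto. Qed.

Lemma comp_notW2 W a b : comp W a b -> ~ W b.
Proof. intros H. apply comp_sym in H. eapply comp_notW1; eauto. Qed.

Lemma comp_mono (W W' : V -> Prop) a b : (forall x, W x -> W' x) -> comp W' a b -> comp W a b.
Proof. intros H [l [Hl Q]]. exists l. split; auto. intros q Iq Wq. apply (Q q Iq). auto. Qed.

Lemma comp_in_walk W l x y a b : walk E x y l -> (forall q, In q l -> ~ W q) -> In a l -> In b l -> comp W a b.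
Proof.
  intros [_ [_ C]] Q Ia Ib. destruct (walk_sub E l a b Esym C Ia Ib) as [l' [Hw Hi]].
  exists l'. split; auto.
Qed.

Lemma first_hit (A : V -> Prop) z y l : walk E z y l -> ~ A z -> A y ->
  exists z' y', comp A z z' /\ E z' y' /\ A y' /\ In y' l.
Proof.
  intros Hw Nz Ay. pose proof Hw as Hw'. apply walk_cons in Hw as [l' [-> [L C]]].
  destruct (first_split A (z :: l')) as [m [y' [rest [Hl [Ay' Hm]]]]].
  { exists y. split; auto. rewrite <- L, <- last_cons_same. apply in_last. discriminate. }
  destruct m as [|a m].
  { simpl in Hl. injection Hl; intros; subst. contradiction. }
  assert (a = z) by (injection Hl; auto). subst a.
  exists (last (z :: m) z), y'. split; [|split; [|split; [exact Ay'|]]].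
  - exists (z :: m). split.
    + split; [reflexivity|]. split; [reflexivity|]. rewrite Hl in C. apply chain_prefix in C. exact C.
    + exact Hm.
  - rewrite Hl in C. apply chain_app in C as [C _]. apply chain_last_edge; auto. discriminate.
  - rewrite Hl. apply in_or_app. right; left; auto.
Qed.

Variables (VT0 : V -> Prop) (ET0 : V -> V -> Prop) (r : V).
Hypothesis HW : weak_normal_tree (graph_fam E) VT0 ET0 r.
Let HT0 : is_rooted_tree VT0 ET0 r := proj1 HW.

Lemma F1 t : VT0 t -> Gconn r t.
Proof.
  intros Vt. destruct (proj2 (proj2 HW) r t (tle_root _ _ _ _ HT0 t Vt)) as [C [HC [Cr [Ct _]]]].
  destruct (HC r t Cr Ct) as [F [[_ HF] [_ [Fr Ft]]]]. destruct (HF r t Fr Ft) as [l [P _]].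
  exists l. apply path_walk; auto.
Qed.

Lemma sep (W : V -> Prop) n : (forall t k, VT0 t -> lvl ET0 r t k -> k < n -> W t) ->
  forall t t', VT0 t -> VT0 t' -> lvl ET0 r t n -> lvl ET0 r t' n -> comp W t t' -> t = t'.
Proof.
  intros H3 t t' Vt Vt' Lt Lt' [l [Hl Q]].
  assert (Hc : conn_set (graph_fam E) (fun z => In z l)).
  { intros a b Ia Ib. exists (fun z => In z l). split; [|split; [auto|auto]].
    split; [exists l; auto|]. intros x y Ix Iy.
    destruct Hl as [_ [_ C]]. destruct (walk_sub E l x y Esym C Ix Iy) as [l' [Hw Hi]].
    destruct (walk_shorten _ _ _ _ _ Hw) as [l'' [P Hi']]. exists l''. split; auto. }
  assert (It : In t l) by (destruct Hl as [H _]; destruct l; inversion H; left; auto).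
  assert (It' : In t' l) by (destruct Hl as [H1 [H2 _]]; rewrite <- H2; apply in_last; intros ->; discriminate H1).
  destruct (classic (tcomparable VT0 ET0 r t t')) as [[Hc1|Hc1]|Hnc].
  - apply (lvl_tle _ _ _ _ HT0 _ _ _ _ Hc1 Lt Lt'). reflexivity.
  - symmetry. apply (lvl_tle _ _ _ _ HT0 _ _ _ _ Hc1 Lt' Lt). reflexivity.
  - exfalso. destruct (proj1 (proj2 HW) _ Hc t t' It It' Vt Vt' Hnc) as [w [Iw [Hw1 Hw2]]].
    destruct (lvl_ex _ _ _ _ HT0 w (tle_VT1 _ _ _ _ _ _ Hw1)) as [k Lw].
    destruct (lvl_tle _ _ _ _ HT0 _ _ _ _ Hw1 Lw Lt) as [Hk1 Hk2].
    destruct (lvl_tle _ _ _ _ HT0 _ _ _ _ Hw2 Lw Lt') as [_ Hk3].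
    destruct (Nat.eq_dec k n) as [->|Hne].
    + apply Hnc. left. rewrite <- (Hk2 eq_refl), (Hk3 eq_refl). apply tle_refl; auto.
    + apply (Q w Iw). apply (H3 w k); auto. eapply tle_VT1; eauto. lia.
Qed.

End D1.

Lemma chain_nth {X} (R : X -> X -> Prop) l j d : chain R l -> S j < length l -> R (nth j l d) (nth (S j) l d).
Proof.
  revert j. induction l as [|a l IH]; intros j C Hj; [simpl in Hj; lia|].
  destruct l as [|b l]; [simpl in Hj; lia|]. destruct C as [Rab C].
  destruct j as [|j]; [exact Rab|]. apply (IH j C). simpl in *; lia.
Qed.

Lemma max_nat (P : nat -> Prop) N : (exists j, P j) -> (forall j, P j -> j < N) ->
  exists jm, P jm /\ forall j, P j -> j <= jm.
Proof.
  revert P. induction N as [|N IH]; intros P [j Pj] HN; [specialize (HN j Pj); lia|].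
  destruct (classic (P N)) as [PN|PN].
  - exists N. split; auto. intros k Pk. specialize (HN k Pk). lia.
  - apply IH; eauto. intros k Pk. specialize (HN k Pk). assert (k <> N) by (intros ->; contradiction). lia.
Qed.

Lemma anc_mono {X} (W W' : X -> Prop) p p' d d' r a x : parent_ok W p d r ->
  (forall y, W y -> W' y /\ p' y = p y /\ d' y = d y) -> anc W p d a x -> anc W' p' d' a x.
Proof.
  intros HP Hs [Wx [k [Hk E]]]. destruct (Hs x Wx) as [W'x [_ Dx]]. split; auto.
  exists k. split; [lia|]. rewrite <- E. clear E.
  assert (forall j, j <= k -> Nat.iter j p' x = Nat.iter j p x).
  { induction j as [|j IH]; intros Hj; [reflexivity|]. simpl. rewrite IH by lia.
    destruct (iter_W _ _ _ _ _ HP x j Wx) as [Wj _]; [lia|]. apply Hs; auto. }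
  apply H; auto.
Qed.

Section D2.
Variable V : Type.
Variable E : V -> V -> Prop.
Hypothesis Esym : forall x y, E x y -> E y x.
Variables (VT0 : V -> Prop) (ET0 : V -> V -> Prop) (r : V).
Hypothesis HW : weak_normal_tree (graph_fam E) VT0 ET0 r.

Local Notation cmp := (comp V E).
Local Notation adjc := (adj V E).

Record st : Type := mkst { sW : V -> Prop; sp : V -> V; sd : V -> nat }.

Definition ancs (s : st) := anc (sW s) (sp s) (sd s).

Definition Inv (n : nat) (s : st) : Prop :=
  parent_ok (sW s) (sp s) (sd s) r /\
  (forall x, sW s x -> x <> r -> E (sp s x) x) /\
  (forall x y l, sW s x -> sW s y -> path_of E x y l ->
     (forall z, In z l -> z <> x -> z <> y -> ~ sW s z) -> ancs s x y \/ ancs s y x) /\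
  (forall t k, VT0 t -> lvl ET0 r t k -> k < n -> sW s t) /\
  (forall z, ~ sW s z -> Gconn V E r z -> exists m, sW s m /\ adjc (sW s) m z /\
       forall w, sW s w -> adjc (sW s) w z -> ancs s w m).

Definition goodQ (s : st) t q := exists m q', q = m :: q' /\ q' <> [] /\ sW s m /\ path_of E m t q /\
   (forall z, In z q' -> ~ sW s z) /\ (forall w, sW s w -> adjc (sW s) w t -> ancs s w m).

Definition NewT n (s : st) t := VT0 t /\ lvl ET0 r t n /\ ~ sW s t.

Definition Qf (s : st) t := epsilon (inhabits (@nil V)) (goodQ s t).

Definition pif n (s : st) x := epsilon (inhabits (r, 0)) (fun ti =>
  NewT n s (fst ti) /\ S (snd ti) < length (Qf s (fst ti)) /\ nth (S (snd ti)) (Qf s (fst ti)) r = x).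

Definition step n (s : st) : st := mkst
  (fun x => sW s x \/ exists t, NewT n s t /\ In x (tl (Qf s t)))
  (fun x => if excluded_middle_informative (sW s x) then sp s x
            else nth (snd (pif n s x)) (Qf s (fst (pif n s x))) r)
  (fun x => if excluded_middle_informative (sW s x) then sd s x
            else sd s (hd r (Qf s (fst (pif n s x)))) + S (snd (pif n s x))).

Definition s0 : st := mkst (fun x => x = r) (fun x => x) (fun _ => 0).

Fixpoint stage n : st := match n with 0 => s0 | S k => step k (stage k) end.

Lemma old_x n s x : sW s x -> sW (step n s) x /\ sp (step n s) x = sp s x /\ sd (step n s) x = sd s x.
Proof. intros Wx. unfold step; simpl. destruct (excluded_middle_informative (sW s x)); [|contradiction]. auto. Qed.

Section Step.
Variable n : nat.
Variable s : st.
Hypothesis HI : Inv n s.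
Let s' := step n s.
Let W := sW s.
Let Q := Qf s.

Lemma HP0 : parent_ok (sW s) (sp s) (sd s) r. Proof. apply HI. Qed.

Lemma Q_good t : NewT n s t -> goodQ s t (Q t).
Proof.
  intros [Vt [Lt Nt]]. unfold Q, Qf. apply epsilon_spec.
  destruct HI as [_ [_ [_ [_ I4]]]].
  destruct (I4 t Nt (F1 V E VT0 ET0 r HW t Vt)) as [m [Wm [[z [Cz Emz]] Hm]]].
  apply (comp_sym V E Esym) in Cz. destruct Cz as [l [Hl Ql]].
  destruct (walk_shorten _ _ _ _ _ Hl) as [l' [P Pi]].
  exists (m :: l'), m, l'. split; [reflexivity|]. split; [destruct P as [P _]; destruct l'; discriminate|].
  split; [exact Wm|]. split; [|split; [intros q Iq; apply Ql, Pi, Iq| exact Hm]].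
  destruct P as [P1 [P2 [P3 P4]]]. destruct l' as [|a l'']; [discriminate|]. injection P1 as ->.
  split; [reflexivity|]. split; [rewrite last_cons2; rewrite (last_indep _ _ _ z); exact P2|].
  split; [split; auto|]. constructor; auto. intros Iq. apply (Ql m); auto.
Qed.

Lemma Q_shape t : NewT n s t -> exists q', Q t = hd r (Q t) :: q' /\ q' <> [] /\ W (hd r (Q t)) /\
   path_of E (hd r (Q t)) t (Q t) /\ (forall z, In z q' -> ~ W z) /\
   (forall w, W w -> adjc W w t -> ancs s w (hd r (Q t))).
Proof.
  intros Ht. destruct (Q_good t Ht) as [m [q' [E1 [H1 [H2 [H3 [H4 H5]]]]]]].
  exists q'. rewrite E1 in *. simpl. split; [reflexivity|]. split; [exact H1|]. split; [exact H2|]. split; [exact H3|]. split; [exact H4|exact H5].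
Qed.

Lemma Q_tail t x : NewT n s t -> In x (tl (Q t)) -> ~ W x /\ cmp W x t.
Proof.
  intros Ht Ix. destruct (Q_shape t Ht) as [q' [EQ [Hq [Wm [P [Hq' _]]]]]].
  rewrite EQ in Ix. simpl in Ix. split; [apply Hq'; auto|].
  destruct P as [_ [L [C _]]]. rewrite EQ in L, C. rewrite last_cons_same in L.
  assert (It : In t q') by (rewrite <- L; apply in_last; auto).
  destruct (walk_sub E q' x t Esym (chain_tl _ _ _ _ C) Ix It) as [l' [Hw Hi]].
  exists l'. split; auto.
Qed.

Lemma NewT_uniq t t' : NewT n s t -> NewT n s t' -> cmp W t t' -> t = t'.
Proof.
  intros [V1 [L1 N1]] [V2 [L2 N2]] C. apply (sep V E Esym VT0 ET0 r HW W n); auto.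
  apply HI.
Qed.

Lemma tail_uniq t t' x : NewT n s t -> NewT n s t' -> In x (tl (Q t)) -> In x (tl (Q t')) -> t = t'.
Proof.
  intros H1 H2 I1 I2. apply NewT_uniq; auto.
  apply comp_trans with x; [apply (comp_sym V E Esym)|]; apply Q_tail; auto.
Qed.

Lemma Q_nodup t : NewT n s t -> NoDup (Q t).
Proof. intros Ht. destruct (Q_shape t Ht) as [q' [_ [_ [_ [P _]]]]]. apply P. Qed.

Lemma nth_tail t j : NewT n s t -> S j < length (Q t) -> In (nth (S j) (Q t) r) (tl (Q t)).
Proof.
  intros Ht Hj. destruct (Q_shape t Ht) as [q' [EQ _]]. rewrite EQ in *. simpl in *.
  apply nth_In. lia.
Qed.

Lemma tail_idx t x : NewT n s t -> In x (tl (Q t)) -> exists j, S j < length (Q t) /\ x = nth (S j) (Q t) r.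
Proof.
  intros Ht Ix. destruct (Q_shape t Ht) as [q' [EQ _]]. rewrite EQ in *. simpl in *.
  destruct (In_nth q' x r Ix) as [j [Hj <-]]. exists j. split; [lia|reflexivity].
Qed.

Lemma pif_spec t j : NewT n s t -> S j < length (Q t) -> pif n s (nth (S j) (Q t) r) = (t, j).
Proof.
  intros Ht Hj. set (x := nth (S j) (Q t) r).
  assert (Hs : NewT n s (fst (pif n s x)) /\ S (snd (pif n s x)) < length (Qf s (fst (pif n s x))) /\
               nth (S (snd (pif n s x))) (Qf s (fst (pif n s x))) r = x).
  { unfold pif. apply epsilon_spec with (P := fun ti => NewT n s (fst ti) /\ S (snd ti) < length (Qf s (fst ti)) /\ nth (S (snd ti)) (Qf s (fst ti)) r = x).
    exists (t, j). simpl. auto. }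
  destruct (pif n s x) as [t0 j0]. simpl in Hs. destruct Hs as [H0 [Hj0 E0]].
  assert (t0 = t).
  { apply (tail_uniq t0 t x); auto; [rewrite <- E0|]; apply nth_tail; auto. }
  subst t0. f_equal.
  assert (S j0 = S j); [|lia].
  apply (proj1 (NoDup_nth (Q t) r) (Q_nodup t Ht)); auto.
Qed.

Lemma Qnth_new t j : NewT n s t -> S j < length (Q t) ->
  ~ W (nth (S j) (Q t) r) /\ sW s' (nth (S j) (Q t) r) /\
  sp s' (nth (S j) (Q t) r) = nth j (Q t) r /\
  sd s' (nth (S j) (Q t) r) = sd s (hd r (Q t)) + S j.
Proof.
  intros Ht Hj. assert (Nx : ~ W (nth (S j) (Q t) r)) by (apply (Q_tail t); auto; apply nth_tail; auto).
  split; auto. unfold s', step; simpl. split; [right; exists t; split; auto; apply nth_tail; auto|].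
  destruct (excluded_middle_informative (sW s (nth (S j) (Q t) r))) as [H|H]; [contradiction|].
  rewrite pif_spec; auto.
Qed.

Lemma Qnth t j : NewT n s t -> j < length (Q t) ->
  sW s' (nth j (Q t) r) /\ sd s' (nth j (Q t) r) = sd s (hd r (Q t)) + j.
Proof.
  intros Ht Hj. destruct j as [|j].
  - destruct (Q_shape t Ht) as [q' [EQ [_ [Wm _]]]].
    assert (nth 0 (Q t) r = hd r (Q t)) by (rewrite EQ; reflexivity). rewrite H.
    destruct (old_x n s _ Wm) as [A1 [_ A3]]. fold s' in A1, A3. rewrite A3. split; auto.
  - destruct (Qnth_new t j Ht Hj) as [_ [A [_ B]]]. auto.
Qed.

Lemma step_parent : parent_ok (sW s') (sp s') (sd s') r.
Proof.
  destruct HP0 as [Hr [Hd0 [Hp Hz]]].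
  split; [left; exact Hr|]. split.
  { destruct (old_x n s r Hr) as [_ [_ D]]. fold s' in D. rewrite D; auto. }
  split.
  - intros x Wx Hx. destruct (classic (W x)) as [Wo|Wn].
    + destruct (old_x n s x Wo) as [_ [P1 D1]]. fold s' in P1, D1. rewrite P1, D1.
      destruct (Hp x Wo Hx) as [W1 D2]. destruct (old_x n s _ W1) as [W2 [_ D3]]. fold s' in W2, D3.
      rewrite D3. auto.
    + destruct Wx as [Wx|[t [Ht Ix]]]; [contradiction|].
      destruct (tail_idx t x Ht Ix) as [j [Hj ->]].
      destruct (Qnth_new t j Ht Hj) as [_ [_ [P1 D1]]]. rewrite P1, D1.
      destruct (Qnth t j Ht) as [W2 D2]; [lia|]. rewrite D2. split; auto.
  - intros x Wx D. destruct (classic (W x)) as [Wo|Wn].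
    + destruct (old_x n s x Wo) as [_ [_ D1]]. fold s' in D1. apply Hz; auto. congruence.
    + destruct Wx as [Wx|[t [Ht Ix]]]; [contradiction|].
      destruct (tail_idx t x Ht Ix) as [j [Hj ->]].
      destruct (Qnth_new t j Ht Hj) as [_ [_ [_ D1]]]. lia.
Qed.

Lemma step_edges x : sW s' x -> x <> r -> E (sp s' x) x.
Proof.
  intros Wx Hx. destruct (classic (W x)) as [Wo|Wn].
  - destruct (old_x n s x Wo) as [_ [P1 _]]. fold s' in P1. rewrite P1. apply HI; auto.
  - destruct Wx as [Wx|[t [Ht Ix]]]; [contradiction|].
    destruct (tail_idx t x Ht Ix) as [j [Hj ->]].
    destruct (Qnth_new t j Ht Hj) as [_ [_ [P1 _]]]. rewrite P1.
    destruct (Q_shape t Ht) as [q' [_ [_ [_ [P _]]]]]. apply chain_nth; auto. apply P.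
Qed.

Lemma transfer a x : ancs s a x -> ancs s' a x.
Proof.
  apply anc_mono with r; [apply HP0|]. intros y Wy. apply old_x; auto.
Qed.

Lemma A2 t i j : NewT n s t -> i <= j -> j < length (Q t) -> ancs s' (nth i (Q t) r) (nth j (Q t) r).
Proof.
  intros Ht Hij Hj. destruct (Qnth t j Ht Hj) as [Wj Dj]. split; auto.
  exists (j - i). split; [lia|].
  assert (forall k, k <= j -> Nat.iter k (sp s') (nth j (Q t) r) = nth (j - k) (Q t) r).
  { induction k as [|k IH]; intros Hk; [simpl; f_equal; lia|].
    change (Nat.iter (S k) (sp s') (nth j (Q t) r)) with (sp s' (Nat.iter k (sp s') (nth j (Q t) r))).
    rewrite IH by lia. replace (j - k) with (S (j - S k)) by lia.
    destruct (Qnth_new t (j - S k) Ht) as [_ [_ [P1 _]]]; [lia|]. exact P1. }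
  rewrite H by lia. f_equal. lia.
Qed.

Lemma m_adj t w : NewT n s t -> W w -> adjc W w t -> ancs s' w (hd r (Q t)).
Proof.
  intros Ht Ww Ha. destruct (Q_shape t Ht) as [q' [_ [_ [_ [_ [_ H]]]]]]. apply transfer, H; auto.
Qed.

Lemma hd_nth0 t : hd r (Q t) = nth 0 (Q t) r.
Proof. destruct (Q t); reflexivity. Qed.

Lemma Qlen t : NewT n s t -> 0 < length (Q t).
Proof. intros Ht. destruct (Q_shape t Ht) as [q' [EQ _]]. rewrite EQ. simpl. lia. Qed.

Lemma comp_edge (A : V -> Prop) a b : ~ A a -> ~ A b -> E a b -> cmp A a b.
Proof.
  intros Ha Hb Hab. exists [a; b]. split; [split; [reflexivity|split; [reflexivity|simpl; auto]]|].
  intros q [<-|[<-|[]]]; auto.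
Qed.

Lemma main_case x y l : ~ W x -> sW s' x -> sW s' y -> path_of E x y l ->
  (forall z, In z l -> z <> x -> z <> y -> ~ sW s' z) -> ancs s' x y \/ ancs s' y x.
Proof.
  intros Nx Wx Wy P Hint.
  destruct Wx as [Wx|[t [Ht Ix]]]; [contradiction|].
  assert (HlW : forall z, In z l -> z <> x -> z <> y -> ~ W z).
  { intros z Iz H1 H2 Wz. apply (Hint z Iz H1 H2). left; exact Wz. }
  destruct (classic (W y)) as [Wyo|Nyo].
  - destruct (first_hit V E W x y l (path_walk _ _ _ _ _ P) Nx Wyo) as [z1 [y1 [C1 [E1 [W1 I1]]]]].
    assert (y1 = y).
    { destruct (classic (y1 = y)) as [|H]; auto. destruct (classic (y1 = x)) as [->|H']; [contradiction|].
      exfalso. apply (HlW y1 I1 H' H W1). }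
    subst y1. right.
    destruct (tail_idx t x Ht Ix) as [j [Hj Ex]].
    apply (anc_trans _ _ _ _ r step_parent _ (nth 0 (Q t) r)).
    + rewrite <- hd_nth0. apply (m_adj t); auto. exists z1. split; [|apply Esym; auto].
      apply comp_trans with x; auto. apply (comp_sym V E Esym). apply (Q_tail t); auto.
    + rewrite Ex. apply A2; auto. lia.
  - destruct Wy as [Wy|[t' [Ht' Iy]]]; [contradiction|].
    assert (Cxy : cmp W x y).
    { apply (comp_in_walk V E Esym W l x y); [apply (path_walk _ _ _ _ _ P)| |eapply gpath_in_hd; eauto|eapply gpath_in_last; eauto].
      intros q Iq. destruct (classic (q = x)) as [->|H1]; auto. destruct (classic (q = y)) as [->|H2]; auto. }
    assert (t' = t).
    { apply NewT_uniq; auto. apply comp_trans with y; [apply (comp_sym V E Esym), (Q_tail t'); auto|].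
      apply comp_trans with x; [apply (comp_sym V E Esym); auto|]. apply (Q_tail t); auto. }
    subst t'.
    destruct (tail_idx t x Ht Ix) as [i [Hi ->]]. destruct (tail_idx t y Ht Iy) as [j [Hj ->]].
    destruct (le_lt_dec i j); [left|right]; apply A2; auto; lia.
Qed.

Lemma step_normal x y l : sW s' x -> sW s' y -> path_of E x y l ->
  (forall z, In z l -> z <> x -> z <> y -> ~ sW s' z) -> ancs s' x y \/ ancs s' y x.
Proof.
  intros Wx Wy P Hint.
  destruct (classic (W x)) as [Wxo|Nx]; [destruct (classic (W y)) as [Wyo|Ny]|].
  - destruct HI as [_ [_ [I2 _]]]. destruct (I2 x y l Wxo Wyo P) as [H|H].
    + intros z Iz H1 H2 Wz. apply (Hint z Iz H1 H2). left; exact Wz.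
    + left; apply transfer; auto.
    + right; apply transfer; auto.
  - destruct (main_case y x (rev l) Ny Wy Wx (path_rev _ _ _ _ Esym P)) as [H|H]; [|tauto|tauto].
    intros z Iz H1 H2. apply Hint; auto. apply in_rev; auto.
  - apply (main_case x y l); auto.
Qed.

Lemma step_I3 t k : VT0 t -> lvl ET0 r t k -> k < S n -> sW s' t.
Proof.
  intros Vt Lt Hk. destruct HI as [_ [_ [_ [I3 _]]]].
  destruct (Nat.eq_dec k n) as [->|Hne]; [|left; apply (I3 t k); auto; lia].
  destruct (classic (W t)) as [Wt|Nt]; [left; auto|].
  right. exists t. split; [split; auto; split; auto|].
  destruct (Q_shape t) as [q' [EQ [Hq [_ [P _]]]]]; [split; auto|].
  destruct P as [_ [L _]]. change (In t (tl (Q t))). rewrite EQ in L |- *. simpl. rewrite last_cons_same in L.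
  rewrite <- L. apply in_last; auto.
Qed.

Lemma walk_hd_in (x y : V) l : walk E x y l -> In x l.
Proof. intros H. apply walk_cons in H as [l' [-> _]]. left; auto. Qed.

Lemma step_I4 z : ~ sW s' z -> Gconn V E r z -> exists m, sW s' m /\ adjc (sW s') m z /\
       forall w, sW s' w -> adjc (sW s') w z -> ancs s' w m.
Proof.
  intros Nz Gz. assert (Nzo : ~ W z) by (intros H; apply Nz; left; exact H).
  assert (WW' : forall x, W x -> sW s' x) by (intros x Hx; left; exact Hx).
  destruct (classic (exists t, NewT n s t /\ cmp W z t)) as [[t [Ht Czt]]|NA].
  -
    pose proof Czt as Czt'. destruct Czt as [lz [Hlz Qlz]].
    assert (Wt : sW s' t) by (apply (step_I3 t n); [apply Ht|apply Ht|lia]).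
    destruct (first_hit V E (sW s') z t lz Hlz Nz Wt) as [z1 [y1 [C1 [E1 [W1 I1]]]]].
    assert (Ny1 : ~ W y1) by (apply Qlz; auto).
    destruct W1 as [W1|[t1 [Ht1 Iy1]]]; [contradiction|].
    assert (t1 = t).
    { apply NewT_uniq; auto. apply comp_trans with y1; [apply (comp_sym V E Esym), (Q_tail t1); auto|].
      apply comp_trans with z; [|exact Czt'].
      apply (comp_in_walk V E Esym W lz z t); auto. eapply walk_hd_in; eauto. }
    subst t1.
    destruct (tail_idx t y1 Ht Iy1) as [j1 [Hj1 Ey1]].
    destruct (max_nat (fun j => S j < length (Q t) /\ adjc (sW s') (nth (S j) (Q t) r) z) (length (Q t)))
      as [jm [[Hjm Ajm] Hmax]].
    { exists j1. split; auto. exists z1. split; auto. rewrite <- Ey1. apply Esym; auto. }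
    { intros j [Hj _]. lia. }
    exists (nth (S jm) (Q t) r). split; [apply (Qnth_new t jm Ht Hjm)|]. split; [exact Ajm|].
    intros w Ww [z2 [C2 E2]].
    assert (C2o : cmp W z z2) by (apply (comp_mono V E W (sW s')); auto).
    destruct (classic (W w)) as [Wwo|Nw].
    + apply (anc_trans _ _ _ _ r step_parent _ (nth 0 (Q t) r)).
      * rewrite <- hd_nth0. apply (m_adj t); auto. exists z2. split; auto.
        apply comp_trans with z; auto. apply (comp_sym V E Esym); auto.
      * apply A2; auto; lia.
    + destruct Ww as [Ww|[tw [Htw Iw]]]; [contradiction|].
      assert (Cwz2 : cmp W w z2) by (apply comp_edge; auto; eapply (comp_notW2 V E Esym); eauto).
      assert (tw = t).
      { apply NewT_uniq; auto. apply comp_trans with w; [apply (comp_sym V E Esym), (Q_tail tw); auto|].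
        apply comp_trans with z2; auto. apply comp_trans with z; auto. apply (comp_sym V E Esym); auto. }
      subst tw. destruct (tail_idx t w Ht Iw) as [jw [Hjw ->]].
      apply A2; auto. assert (jw <= jm); [|lia]. apply Hmax. split; auto. exists z2; auto.
  -
    destruct HI as [_ [_ [_ [_ I4]]]].
    destruct (I4 z Nzo Gz) as [m [Wm [[z' [Cz' Emz']] Hm]]].
    assert (K : forall q, cmp W z q -> ~ sW s' q).
    { intros q Cq [Wq|[t [Ht Iq]]]; [eapply (comp_notW2 V E Esym); eauto|].
      apply NA. exists t. split; auto. apply comp_trans with q; auto. apply (Q_tail t); auto. }
    assert (Lift : forall q, cmp W z q -> cmp (sW s') z q).
    { intros q Cq. pose proof Cq as [l [Hl Ql]]. exists l. split; auto. intros q' Iq'.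
      apply K. apply (comp_in_walk V E Esym W l z q); auto. eapply walk_hd_in; eauto. }
    exists m. split; [left; exact Wm|]. split; [exists z'; split; auto|].
    intros w Ww [z2 [C2 E2]].
    assert (C2o : cmp W z z2) by (apply (comp_mono V E W (sW s')); auto).
    destruct (classic (W w)) as [Wwo|Nw].
    + apply transfer. apply Hm; auto. exists z2; auto.
    + destruct Ww as [Ww|[tw [Htw Iw]]]; [contradiction|].
      exfalso. apply NA. exists tw. split; auto. apply comp_trans with z2; auto.
      apply comp_trans with w; [|apply (Q_tail tw); auto].
      apply (comp_sym V E Esym). apply comp_edge; auto. eapply (comp_notW2 V E Esym); eauto.
Qed.

Lemma step_inv : Inv (S n) s'.
Proof.
  split; [apply step_parent|]. split; [apply step_edges|]. split; [apply step_normal|].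
  split; [apply step_I3|apply step_I4].
Qed.

End Step.
End D2.

Section D3.
Variable V : Type.
Variable E : V -> V -> Prop.
Hypothesis Esym : forall x y, E x y -> E y x.
Variables (VT0 : V -> Prop) (ET0 : V -> V -> Prop) (r : V).
Hypothesis HW : weak_normal_tree (graph_fam E) VT0 ET0 r.

Local Notation stg := (stage V E VT0 ET0 r).

Lemma s0_parent : parent_ok (sW V (s0 V r)) (sp V (s0 V r)) (sd V (s0 V r)) r.
Proof. split; [reflexivity|]. split; [reflexivity|]. split; simpl; [intros x -> H; congruence|auto]. Qed.

Lemma inv0 : Inv V E VT0 ET0 r 0 (s0 V r).
Proof.
  split; [apply s0_parent|]. split; [simpl; intros x -> H; congruence|]. split.
  - intros x y l Hx Hy _ _. simpl in Hx, Hy. subst. left. apply anc_refl. reflexivity.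
  - split; [intros; lia|].
    intros z Nz [l Hl]. simpl in Nz.
    destruct (first_hit V E (fun x => x = r) z r (rev l) (walk_rev _ _ _ _ _ Esym Hl) Nz eq_refl)
      as [z1 [y1 [C1 [E1 [W1 _]]]]]. simpl in W1. subst y1.
    exists r. split; [reflexivity|]. split; [exists z1; split; auto|].
    intros w Hw _. simpl in Hw. subst w. apply anc_refl. reflexivity.
Qed.

Lemma inv_all n : Inv V E VT0 ET0 r n (stg n).
Proof.
  induction n as [|n IH]; [apply inv0|]. change (stg (S n)) with (step V E VT0 ET0 r n (stg n)). apply (step_inv V E Esym VT0 ET0 r HW n); auto.
Qed.

Lemma mono n m x : n <= m -> sW V (stg n) x ->
  sW V (stg m) x /\ sp V (stg m) x = sp V (stg n) x /\ sd V (stg m) x = sd V (stg n) x.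
Proof.
  intros Hnm. induction Hnm as [|m Hnm IH]; [auto|]. intros Wx.
  destruct (IH Wx) as [W1 [P1 D1]]. change (stg (S m)) with (step V E VT0 ET0 r m (stg m)).
  destruct (old_x V E VT0 ET0 r m (stg m) x W1) as [W2 [P2 D2]]. rewrite P2, D2. auto.
Qed.

Definition Wf x := exists n, sW V (stg n) x.
Definition Nf x := epsilon (inhabits 0) (fun n => sW V (stg n) x).
Definition pf x := sp V (stg (Nf x)) x.
Definition df x := sd V (stg (Nf x)) x.

Lemma Nf_spec x : Wf x -> sW V (stg (Nf x)) x.
Proof. intros H. unfold Nf. apply epsilon_spec with (P := fun n => sW V (stg n) x). exact H. Qed.

Lemma fin_agree n x : sW V (stg n) x -> pf x = sp V (stg n) x /\ df x = sd V (stg n) x.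
Proof.
  intros Wx. assert (Hf : sW V (stg (Nf x)) x) by (apply Nf_spec; exists n; auto).
  unfold pf, df. destruct (le_lt_dec n (Nf x)) as [H|H].
  - destruct (mono n (Nf x) x H Wx) as [_ [A B]]. auto.
  - destruct (mono (Nf x) n x (Nat.lt_le_incl _ _ H) Hf) as [_ [A B]]. auto.
Qed.

Lemma fin_ext n x : sW V (stg n) x -> Wf x /\ pf x = sp V (stg n) x /\ df x = sd V (stg n) x.
Proof. intros H. split; [exists n; auto|]. apply fin_agree; auto. Qed.

Lemma fin_parent : parent_ok Wf pf df r.
Proof.
  split; [exists 0; reflexivity|]. split.
  { destruct (fin_agree 0 r eq_refl) as [_ D]. rewrite D. reflexivity. }
  split.
  - intros x [n Wx] Hx. destruct (inv_all n) as [[_ [_ [Hp _]]] _].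
    destruct (Hp x Wx Hx) as [W1 D1]. destruct (fin_agree n x Wx) as [P2 D2].
    destruct (fin_ext n _ W1) as [W3 [_ D3]]. rewrite P2, D2, D3. auto.
  - intros x [n Wx] D. destruct (inv_all n) as [[_ [_ [_ Hz]]] _].
    apply Hz; auto. destruct (fin_agree n x Wx) as [_ D2]. congruence.
Qed.

Lemma fin_transfer n a x : ancs V (stg n) a x -> anc Wf pf df a x.
Proof.
  intros H. apply (anc_mono _ _ _ _ _ _ r a x (proj1 (inv_all n))); auto. intros y Wy. apply fin_ext; auto.
Qed.

Lemma fin_normal : graph_normal_tree E Wf (PE Wf pf r) r.
Proof.
  split; [apply (PE_tree _ _ _ df), fin_parent|]. split.
  - intros x y [Wx [Wy [[Hx Ep]|[Hy Ep]]]].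
    + destruct Wx as [n Wx]. destruct (inv_all n) as [_ [HE _]].
      apply Esym. rewrite <- Ep. destruct (fin_agree n x Wx) as [-> _]. apply HE; auto.
    + destruct Wy as [n Wy]. destruct (inv_all n) as [_ [HE _]].
      rewrite <- Ep. destruct (fin_agree n y Wy) as [-> _]. apply HE; auto.
  - intros x y l P [a Wx] [b Wy] Hint.
    destruct (mono a (a + b) x ltac:(lia) Wx) as [Wx' _].
    destruct (mono b (a + b) y ltac:(lia) Wy) as [Wy' _].
    destruct (inv_all (a + b)) as [_ [_ [I2 _]]].
    destruct (I2 x y l Wx' Wy' P) as [H|H].
    + intros z Iz H1 H2 Wz. apply (Hint z Iz H1 H2). exists (a + b); auto.
    + left. apply (anc_tle _ _ _ df); [apply fin_parent|]. eapply fin_transfer; eauto.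
    + right. apply (anc_tle _ _ _ df); [apply fin_parent|]. eapply fin_transfer; eauto.
Qed.

Lemma fin_contains t : VT0 t -> Wf t.
Proof.
  intros Vt. destruct (lvl_ex _ _ _ _ (proj1 HW) t Vt) as [k Lk].
  exists (S k). destruct (inv_all (S k)) as [_ [_ [_ [I3 _]]]]. apply (I3 t k); auto.
Qed.

End D3.

Lemma partD (V : Type) (E : V -> V -> Prop) (Esym : forall x y, E x y -> E y x)
  (VT0 : V -> Prop) (ET0 : V -> V -> Prop) (r : V) :
  weak_normal_tree (graph_fam E) VT0 ET0 r ->
  exists VT ET, graph_normal_tree E VT ET r /\ forall t, VT0 t -> VT t.
Proof.
  intros HW. exists (Wf V E VT0 ET0 r), (PE (Wf V E VT0 ET0 r) (pf V E VT0 ET0 r) r).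
  split; [apply fin_normal; auto|]. apply fin_contains; auto.
Qed.


Theorem proposition5p1 (V : Type) (E : V -> V -> Prop)
  (Esym : forall x y, E x y -> E y x) (Eirr : forall x, ~ E x x)
  (U : V -> Prop) :
  ((exists (VT : V -> Prop) (ET : V -> V -> Prop) (r : V),
      graph_normal_tree E VT ET r /\ (forall u, U u -> VT u)) <->
   (exists (VT : V -> Prop) (ET : V -> V -> Prop) (r : V),
      normal_tree (graph_fam E) VT ET r /\ (forall u, U u -> VT u))) /\
  ((exists (VT : V -> Prop) (ET : V -> V -> Prop) (r : V),
      normal_tree (graph_fam E) VT ET r /\ (forall u, U u -> VT u)) <->
   (exists (VT : V -> Prop) (ET : V -> V -> Prop) (r : V),
      weak_normal_tree (graph_fam E) VT ET r /\ (forall u, U u -> VT u))).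
Proof.
  split; split.
  - intros [VT [ET [r [HG HU]]]]. exists VT, ET, r. split; auto. apply partC; auto.
  - intros [VT [ET [r [HN HU]]]]. destruct (partD V E Esym VT ET r (proj1 HN)) as [VT' [ET' [HG H']]].
    exists VT', ET', r. split; auto.
  - intros [VT [ET [r [HN HU]]]]. exists VT, ET, r. split; auto. apply HN.
  - intros [VT [ET [r [HW HU]]]]. destruct (partD V E Esym VT ET r HW) as [VT' [ET' [HG H']]].
    exists VT', ET', r. split; auto. apply partC; auto.
Qed.
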